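(* Let $\alpha\colon\Gamma\curvearrowright X$ be an action of a countable group on a compact, Hausdorff, $0$-dimensional space. The natural semigroup homomorphism $\pi\colon T(\alpha)\to H(\alpha)$ is injective if and only if $T(\alpha)$ is cancellative.
   Context: Clopen type semigroup: let $Y = X\times\mathbb N$, and let $\tilde\Gamma=\Gamma\times\mathfrak S$ ($\mathfrak S$ the permutation group of $\mathbb N$) act on $Y$ by $(\gamma,\sigma)(x,n)=(\alpha(\gamma)x,\sigma(n))$. A clopen $A\subseteq Y$ is bounded if $A\cap(X\times\{n\})=\emptyset$ for all large $n$. Bounded clopen $A,B$ are equidecomposable if there are clopen $A_1,\dots,A_n$ and $\tilde\gamma_i\in\tilde\Gamma$ with $A=\bigsqcup_i A_i$, $B=\bigsqcup_i\tilde\gamma_iA_i$. $T(\alpha)$ is the set of classes $[A]$, with $[A]+[B]=[A'\sqcup B']$ for disjoint representatives. Cancellative: $a+b=a+c\Rightarrow b=c$. The $0$-homology group is $H(\alpha)=C(X,\mathbb Z)/\langle f-f\circ\alpha(\gamma): f\in C(X,\mathbb Z),\gamma\in\Gamma\rangle$. The map $\pi$ sends $[A]$, for a bounded clopen $A=\bigsqcup_i A_i\times\{i\}$, to the class in $H(\alpha)$ of $\sum_i \mathbf 1_{A_i}$ (this is a well-defined monoid homomorphism onto the image of $C(X,\mathbb N)$). *)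

(* Defs.v *)
From HB Require Import structures.
From mathcomp Require Import all_boot all_order all_algebra.
From mathcomp Require Import all_classical all_reals.
From mathcomp Require Import topology_structure product_topology separation_axioms
  discrete_topology nat_topology compact.
Set Implicit Arguments. Unset Strict Implicit. Unset Printing Implicit Defensive.
Import Order.TTheory GRing.Theory Num.Theory.
Local Open Scope classical_set_scope.
Local Open Scope ring_scope.

Definition is_group (G : Type) (mul : G -> G -> G) (one : G) (inv : G -> G) :=
  [/\ forall a b c, mul a (mul b c) = mul (mul a b) c,
      forall a, mul one a = a,
      forall a, mul a one = a,
      forall a, mul (inv a) a = one &
      forall a, mul a (inv a) = one].

Definition zero_dim (X : topologicalType) :=
  forall (U : set X) (x : X), open U -> U x ->
    exists V : set X, [/\ clopen V, V x & V `<=` U].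

(* An action of the group G on X by homeomorphisms (continuous maps with the
   action laws; each alpha g is then a homeomorphism with inverse alpha g^-1). *)
Definition is_action (X : topologicalType) (G : Type) (mul : G -> G -> G) (one : G)
  (alpha : G -> X -> X) :=
  [/\ forall g, continuous (alpha g),
      forall x, alpha one x = x &
      forall g h x, alpha (mul g h) x = alpha g (alpha h x)].

Section TypeSemigroup.
Context {X : topologicalType} {G : Type} (alpha : G -> X -> X).

Definition Y := (X * nat)%type.

Definition bounded_by (A : set Y) (N : nat) := forall x n, A (x, n) -> (n < N)%N.
Definition bounded (A : set Y) := exists N, bounded_by A N.
Definition bclopen (A : set Y) := clopen A /\ bounded A.

Definition act_tilde (g : G) (sigma : nat -> nat) (A : set Y) : set Y :=
  (fun p : Y => (alpha g p.1, sigma p.2)) @` A.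

Definition equidec (A B : set Y) :=
  exists (n : nat) (P : 'I_n -> set Y) (g : 'I_n -> G) (sigma : 'I_n -> nat -> nat),
    (forall i, clopen (P i)) /\
    (forall i, bijective (sigma i)) /\
    A = \bigcup_(i in [set: 'I_n]) P i /\
    (forall i j, i != j -> P i `&` P j = set0) /\
    B = \bigcup_(i in [set: 'I_n]) act_tilde (g i) (sigma i) (P i) /\
    (forall i j, i != j ->
       act_tilde (g i) (sigma i) (P i) `&` act_tilde (g j) (sigma j) (P j) = set0).

(* T(alpha) is cancellative: [A] + [B] = [A] + [C] implies [B] = [C], where the
   sums are computed with disjoint representatives. *)
Definition T_cancellative :=
  forall A B C A1 B1 A2 C2 : set Y,
    bclopen A -> bclopen B -> bclopen C ->
    bclopen A1 -> bclopen B1 -> bclopen A2 -> bclopen C2 ->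
    equidec A A1 -> equidec B B1 -> A1 `&` B1 = set0 ->
    equidec A A2 -> equidec C C2 -> A2 `&` C2 = set0 ->
    equidec (A1 `|` B1) (A2 `|` C2) ->
    equidec B C.

Definition contZ (f : X -> int) := continuous (f : X -> discrete_topology int).

Inductive coboundary : (X -> int) -> Prop :=
  | cob_gen (f : X -> int) (g : G) :
      contZ f -> coboundary (fun x => f x - f (alpha g x))
  | cob_zero : coboundary (fun _ => 0)
  | cob_add (f h : X -> int) :
      coboundary f -> coboundary h -> coboundary (fun x => f x + h x)
  | cob_opp (f : X -> int) : coboundary f -> coboundary (fun x => - f x).

Definition fiber_count (A : set Y) (N : nat) (x : X) : int :=
  \sum_(n < N) (nat_of_bool (`[< A (x, val n) >]))%:Z.

Definition pi_eq (A B : set Y) :=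
  exists N, [/\ bounded_by A N, bounded_by B N &
    coboundary (fun x => fiber_count A N x - fiber_count B N x)].

Definition pi_injective :=
  forall A B : set Y, bclopen A -> bclopen B -> pi_eq A B -> equidec A B.

End TypeSemigroup.

(* Main.v *)
Require Import Defs.
From HB Require Import structures.
From mathcomp Require Import all_boot all_order all_algebra.
From mathcomp Require Import all_classical all_reals.
From mathcomp Require Import topology_structure product_topology separation_axioms
  discrete_topology nat_topology compact.
From mathcomp Require Import zify ring.
Set Implicit Arguments. Unset Strict Implicit. Unset Printing Implicit Defensive.
Import Order.TTheory GRing.Theory Num.Theory.
Local Open Scope classical_set_scope.

Definition lc {T : topologicalType} {V : Type} (f : T -> V) :=
  forall x, \forall y \near x, f y = f x.

Lemma lc_contZ (X : topologicalType) (f : X -> int) : contZ f <-> lc f.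
Proof.
split=> H x.
  have := H x. move/(@discrete_cvg (discrete_topology int)).
  by [].
apply/(@discrete_cvg (discrete_topology int)) => //.
exact: (H x).
Qed.

Section LC.
Context {T : topologicalType}.

Lemma lc_comp {V W : Type} (h : V -> W) (f : T -> V) : lc f -> lc (h \o f).
Proof. by move=> H x; near=> y; rewrite /=; congr h; exact: (near (H x) y). Unshelve. all: end_near. Qed.

Lemma lc_op2 {U V W : Type} (op : U -> V -> W) (f : T -> U) (g : T -> V) :
  lc f -> lc g -> lc (fun x => op (f x) (g x)).
Proof.
move=> Hf Hg x; near=> y; congr op; [exact: (near (Hf x) y) | exact: (near (Hg x) y)].
Unshelve. all: end_near. Qed.

Lemma lc_cst {V : Type} (v : V) : lc (fun _ : T => v).
Proof. by move=> x; near=> y. Unshelve. all: end_near. Qed.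

Lemma lc_cont {S : topologicalType} {V : Type} (phi : T -> S) (f : S -> V) :
  continuous phi -> lc f -> lc (f \o phi).
Proof. by move=> cphi H x; exact: (cphi x _ (H (phi x))). Qed.

Lemma clopen_lc (U : set T) : clopen U <-> lc (fun x => `[< U x >]).
Proof.
split.
  case=> oU cU x; have [Ux|nUx] := pselect (U x).
    have : nbhs x U by apply: open_nbhs_nbhs.
    apply: filterS => y Uy; by rewrite !asboolT.
  have : nbhs x (~` U) by apply: open_nbhs_nbhs; split => //; exact: closed_openC.
  apply: filterS => y Uy; by rewrite !asboolF.
move=> H; split.
  rewrite openE => x Ux; rewrite /interior.
  apply: filterS (H x) => y; rewrite (asboolT Ux) => /asboolP //.
rewrite -[U]setCK; apply: open_closedC.
rewrite openE => x Ux; rewrite /interior.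
apply: filterS (H x) => y; rewrite (asboolF Ux) => /asboolP //.
Qed.

End LC.

Lemma lc_pairP {X : topologicalType} {V : Type} (f : X * nat -> V) :
  lc f <-> forall n, lc (fun x => f (x, n)).
Proof.
split.
  move=> H n x; have [[U W] /= [Ux Wn] UW] := H (x, n).
  apply: filterS Ux => y Uy; apply: (UW (y, n)); split => //; exact: nbhs_singleton.
move=> H [x n]; exists ([set y | f (y, n) = f (x, n)], [set n]) => /=.
  split; [exact: H | exact: discrete_set1].
by move=> [y m] /= [Hy ->].
Qed.

Lemma lc_ext {T : topologicalType} {V : Type} (f g : T -> V) :
  (forall x, f x = g x) -> lc g -> lc f.
Proof. by move=> e; rewrite (funext e). Qed.

Lemma lc_fin {T : topologicalType} {I : finType} {V : Type} (h : T -> I -> V) :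
  (forall i, lc (fun x => h x i)) -> lc h.
Proof.
move=> H x.
have Hf : \forall y \near x, forall i, h y i = h x i.
  by apply: filter_forall => i; exact: H i x.
apply: filterS Hf => y /= Hy.
by apply: funext => i; exact: Hy.
Qed.

Definition cnt {X : topologicalType} (A : set (X * nat)) (N : nat) (x : X) : nat :=
  \sum_(m < N) `[< A (x, val m) >].

Definition sec {X : topologicalType} (A : set (X * nat)) (N : nat) (x : X) : {set 'I_N} :=
  [set m : 'I_N | `[< A (x, val m) >]]%SET.

Definition secf {X : topologicalType} (A : set (X * nat)) (N : nat) (x : X) : 'I_N -> bool :=
  fun m => `[< A (x, val m) >].

Arguments secf {X} A N x _.
Arguments sec {X} A N x.
Arguments cnt {X} A N x.
Section Count.
Context {X : topologicalType}.
Implicit Types (A B : set (X * nat)) (N : nat) (x : X).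

Lemma cnt_sec A N x : cnt A N x = #|sec A N x|.
Proof.
rewrite /cnt /sec -sum1dep_card [RHS]big_mkcond /=.
by apply: eq_bigr => i _; case: (`[< _ >]).
Qed.

Lemma fcE A N x : fiber_count A N x = Posz (cnt A N x).
Proof.
by rewrite /fiber_count /cnt (big_morph Posz PoszD (erefl (Posz 0))).
Qed.

Lemma cnt_widen A N N' x : bounded_by A N -> (N <= N')%N -> cnt A N' x = cnt A N x.
Proof.
move=> bA le; rewrite /cnt -(subnKC le) big_split_ord /= addnC big1 ?add0n //.
by move=> i _; rewrite asboolF // => /bA /=; rewrite ltnNge leq_addr.
Qed.

Lemma clopen_secf A N : clopen A -> lc (secf A N).
Proof.
move=> /clopen_lc /lc_pairP H; apply: lc_fin => i; exact: H.
Qed.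

Lemma clopen_sec A N : clopen A -> lc (sec A N).
Proof.
move=> /(clopen_secf N) H; apply: (@lc_ext _ _ _ ((fun h : 'I_N -> bool => [set m : 'I_N | h m]%SET) \o secf A N)).
  by move=> x; apply/setP => m; rewrite !inE.
exact: lc_comp.
Qed.

Lemma clopen_cnt A N : clopen A -> lc (cnt A N).
Proof.
move=> /(clopen_secf N) H; apply: (@lc_ext _ _ _ ((fun h : 'I_N -> bool => \sum_(m < N) (h m : nat)) \o secf A N)).
  by [].
exact: lc_comp.
Qed.

Lemma clopenYP A : clopen A <-> forall n, lc (fun x => `[< A (x, n) >]).
Proof. by rewrite clopen_lc lc_pairP. Qed.

End Count.

Lemma lc_bounded {X : topologicalType} (p : X -> nat) :
  compact [set: X] -> lc p -> exists M, forall x, (p x < M)%N.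
Proof.
move=> /compact_near_coveringP cX lp.
have : \forall M \near \oo, [set: X] `<=` (fun x => (p x < M)%N).
  apply: cX => x _; exists ([set y | p y = p x], [set M | (p x < M)%N]) => /=.
    split; [exact: lp | by exists (p x).+1].
  by move=> [y M] /= [-> ->].
move=> [m _ Hm]; exists m => x; exact: (Hm m (leqnn m) x).
Qed.

Lemma bigcup_enum {T : Type} {I : finType} (F : I -> set T) :
  \bigcup_(i in [set: 'I_#|I|]) F (enum_val i) = \bigcup_(i in [set: I]) F i.
Proof.
apply/seteqP; split => [p [i _ Fp] | p [i _ Fp]]; first by exists (enum_val i).
by exists (enum_rank i) => //; rewrite enum_rankK.
Qed.


Definition tgt (N : nat) (S T : {set 'I_N}) (n : 'I_N) : nat :=
  nth 0%N [seq val i | i <- enum T] (index n (enum S)).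

Arguments tgt {N} S T n.

Lemma tgtE N (S T : {set 'I_N}) n : n \in S -> #|S| = #|T| ->
  tgt S T n = val (nth n (enum T) (index n (enum S))).
Proof.
move=> nS eST; rewrite /tgt (nth_map n) // -cardE -eST cardE index_mem mem_enum //.
Qed.

Lemma tgt_mem N (S T : {set 'I_N}) n : n \in S -> #|S| = #|T| ->
  exists2 j, j \in T & tgt S T n = val j.
Proof.
move=> nS eST; rewrite tgtE //; eexists; last by [].
rewrite -mem_enum mem_nth // -cardE -eST cardE index_mem mem_enum //.
Qed.

Lemma tgt_inj N (S T : {set 'I_N}) n n' : n \in S -> n' \in S -> #|S| = #|T| ->
  tgt S T n = tgt S T n' -> n = n'.
Proof.
move=> nS n'S eST; rewrite !tgtE // => /val_inj.
have hi m : m \in S -> (index m (enum S) < size (enum T))%N.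
  by move=> mS; rewrite -cardE -eST cardE index_mem mem_enum.
move=> /(congr1 (fun t => index t (enum T))).
rewrite !index_uniq ?enum_uniq ?hi //.
move=> /(congr1 (fun i => nth n (enum S) i)); rewrite !nth_index ?mem_enum //.
Qed.

Lemma tgt_surj N (S T : {set 'I_N}) j : j \in T -> #|S| = #|T| ->
  exists2 n, n \in S & tgt S T n = val j.
Proof.
move=> jT eST.
have hj : (index j (enum T) < size (enum S))%N by rewrite -cardE eST cardE index_mem mem_enum.
exists (nth j (enum S) (index j (enum T))); first by rewrite -mem_enum mem_nth.
rewrite tgtE; last by []; last by rewrite -mem_enum mem_nth.
by rewrite index_uniq ?enum_uniq // nth_index ?mem_enum.
Qed.

Definition swapn (a b n : nat) : nat := if n == a then b else if n == b then a else n.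

Lemma swapnK a b : cancel (swapn a b) (swapn a b).
Proof.
move=> n; rewrite /swapn.
case: (eqVneq n a) => [->|na]; first by rewrite eqxx; case: eqVneq.
case: (eqVneq n b) => [->|nb]; first by rewrite eqxx.
by rewrite (negbTE na) (negbTE nb).
Qed.

Lemma swapnL a b : swapn a b a = b. Proof. by rewrite /swapn eqxx. Qed.

Section Main.
Variables (G : Type) (mul : G -> G -> G) (one : G) (inv : G -> G)
  (X : topologicalType) (alpha : G -> X -> X).
Hypothesis Hg : is_group mul one inv.
Hypothesis Ha : is_action mul one alpha.

Lemma a1 x : alpha one x = x. Proof. by case: Ha. Qed.
Lemma aM g h x : alpha (mul g h) x = alpha g (alpha h x). Proof. by case: Ha. Qed.
Lemma acont g : continuous (alpha g). Proof. by case: Ha. Qed.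
Lemma aK g x : alpha (inv g) (alpha g x) = x.
Proof. by case: Hg => _ _ _ H _; rewrite -aM H a1. Qed.
Lemma aKV g x : alpha g (alpha (inv g) x) = x.
Proof. by case: Hg => _ _ _ _ H; rewrite -aM H a1. Qed.

Local Notation equidec := (equidec alpha).
Local Notation act := (act_tilde alpha).

Lemma equidec_fin (I : finType) (P : I -> set (X * nat)) (g : I -> G)
    (s : I -> nat -> nat) (A B : set (X * nat)) :
  (forall i, clopen (P i)) -> (forall i, bijective (s i)) ->
  A = \bigcup_(i in [set: I]) P i -> (forall i j, i != j -> P i `&` P j = set0) ->
  B = \bigcup_(i in [set: I]) act (g i) (s i) (P i) ->
  (forall i j, i != j -> act (g i) (s i) (P i) `&` act (g j) (s j) (P j) = set0) ->
  equidec A B.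
Proof.
move=> cP bs eA dP eB dQ.
exists #|I|, (P \o enum_val), (g \o enum_val), (s \o enum_val); split => //=.
split => //; split; first by rewrite bigcup_enum.
split; first by move=> i j ij; apply: dP; apply: contra ij => /eqP /enum_val_inj ->.
split; first by rewrite (bigcup_enum (fun i => act (g i) (s i) (P i))).
by move=> i j ij; apply: dQ; apply: contra ij => /eqP /enum_val_inj ->.
Qed.

Lemma equidec_refl A : clopen A -> equidec A A.
Proof.
move=> cA; apply: (@equidec_fin unit (fun=> A) (fun=> one) (fun=> id)) => //.
- by move=> _; exists id.
- by apply/seteqP; split => [p Ap|p [_ _ Ap]] //; exists tt.
- apply/seteqP; split => [[x n] Ap|p [_ _ [[y m] Ap <-]]]; last by rewrite /= a1.
  by exists tt => //; exists (x, n) => //=; rewrite a1.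
Qed.

Lemma equidec_union A A' B B' : equidec A A' -> equidec B B' ->
  A `&` B = set0 -> A' `&` B' = set0 -> equidec (A `|` B) (A' `|` B').
Proof.
move=> [n1 [P1 [g1 [s1 [cP1 [bs1 [eA [dP1 [eA' dQ1]]]]]]]]].
move=> [n2 [P2 [g2 [s2 [cP2 [bs2 [eB [dP2 [eB' dQ2]]]]]]]]] dAB dAB'.
pose P := fun k : 'I_n1 + 'I_n2 => match k with inl i => P1 i | inr j => P2 j end.
pose g := fun k : 'I_n1 + 'I_n2 => match k with inl i => g1 i | inr j => g2 j end.
pose s := fun k : 'I_n1 + 'I_n2 => match k with inl i => s1 i | inr j => s2 j end.
have PA i : P1 i `<=` A by rewrite eA => p Pp; exists i.
have PB i : P2 i `<=` B by rewrite eB => p Pp; exists i.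
have QA i : act (g1 i) (s1 i) (P1 i) `<=` A' by rewrite eA' => p Pp; exists i.
have QB i : act (g2 i) (s2 i) (P2 i) `<=` B' by rewrite eB' => p Pp; exists i.
apply: (@equidec_fin _ P g s).
- by case.
- by case.
- rewrite eA eB; apply/seteqP; split.
    by move=> p [[i _ Pp]|[i _ Pp]]; [exists (inl i) | exists (inr i)].
  by move=> p [[i|i] _ Pp]; [left; exists i | right; exists i].
- move=> [i|i] [j|j] ij /=.
  + by apply: dP1; apply: contra ij => /eqP ->.
  + by apply/seteqP; split => // p [/PA Ap /PB Bp]; rewrite -dAB.
  + by apply/seteqP; split => // p [/PB Bp /PA Ap]; rewrite -dAB.
  + by apply: dP2; apply: contra ij => /eqP ->.
- rewrite eA' eB'; apply/seteqP; split.
    by move=> p [[i _ Pp]|[i _ Pp]]; [exists (inl i) | exists (inr i)].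
  by move=> p [[i|i] _ Pp]; [left; exists i | right; exists i].
- move=> [i|i] [j|j] ij /=.
  + by apply: dQ1; apply: contra ij => /eqP ->.
  + by apply/seteqP; split => // p [/QA Ap /QB Bp]; rewrite -dAB'.
  + by apply/seteqP; split => // p [/QB Bp /QA Ap]; rewrite -dAB'.
  + by apply: dQ2; apply: contra ij => /eqP ->.
Qed.

Lemma cnt_bigcup (I : finType) (P : I -> set (X * nat)) A N x :
  A = \bigcup_(i in [set: I]) P i -> (forall i j, i != j -> P i `&` P j = set0) ->
  cnt A N x = (\sum_i cnt (P i) N x)%N.
Proof.
move=> eA dP; rewrite /cnt exchange_big; apply: eq_bigr => m _ /=.
have [Ap|nAp] := pselect (A (x, val m)).
  move: (Ap); rewrite {1}eA => -[i0 _ P0].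
  rewrite (bigD1 i0) //= asboolT // big1 ?addn0 ?asboolT //.
  move=> j ji0; rewrite asboolF // => Pj.
  have : (P i0 `&` P j) (x, val m) by [].
  by rewrite dP // eq_sym.
rewrite asboolF // big1 // => i _; rewrite asboolF // => Pi; apply: nAp.
by rewrite eA; exists i.
Qed.

Lemma cnt_act (P : set (X * nat)) g s N x : bijective s ->
  bounded_by P N -> bounded_by (act g s P) N ->
  cnt (act g s P) N x = cnt P N (alpha (inv g) x).
Proof.
move=> [si sK siK]; case: N => [|N] bP bQ; first by rewrite /cnt !big_ord0.
rewrite !cnt_sec.
set y := alpha (inv g) x.
have -> : sec (act g s P) N.+1 x = [set (inord (s (val n)) : 'I_N.+1) | n : 'I_N.+1 in sec P N.+1 y]%SET.
  apply/setP => m; rewrite inE; apply/asboolP/imsetP.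
    move=> [[y' n] Pyn [e1 e2]] /=.
    have ey : y' = y by rewrite /y -e1 aK.
    have nN : (n < N.+1)%N by apply: (bP y'); exact: Pyn.
    exists (Ordinal nN); first by rewrite inE /=; apply/asboolP; rewrite -ey.
    by apply: val_inj => /=; rewrite e2 inordK.
  move=> [n]; rewrite inE => /asboolP Pn ->.
  have Q : act g s P (x, s n) by exists (y, val n) => //=; rewrite /y aKV.
  by rewrite /= inordK; [exact: Q | exact: (bQ x _ Q)].
rewrite card_in_imset // => a b; rewrite !inE => /asboolP Pa /asboolP Pb.
move: Pa Pb => /asboolP Pa /asboolP Pb.
have Qa : act g s P (x, s a) by exists (y, val a) => //=; rewrite /y aKV.
have Qb : act g s P (x, s b) by exists (y, val b) => //=; rewrite /y aKV.
move=> /(congr1 val); rewrite /= !inordK; [|exact: (bQ x)|exact: (bQ x)].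
by move=> /(can_inj sK) /val_inj.
Qed.

Local Notation cob := (coboundary alpha).

Lemma cob_ext (f h : X -> int) : (forall x, f x = h x) -> cob h -> cob f.
Proof. by move=> e; rewrite (funext e). Qed.

Lemma cob_sum (I : Type) (r : seq I) (F : I -> X -> int) :
  (forall i, cob (F i)) -> cob (fun x => \sum_(i <- r) F i x)%R.
Proof.
move=> H; elim: r => [|i r IH].
  by apply: (cob_ext (h := fun _ => 0%R)) => [x|]; [rewrite big_nil | exact: cob_zero].
apply: (cob_ext (h := fun x => F i x + \sum_(j <- r) F j x)%R).
  by move=> x; rewrite big_cons.
exact: cob_add.
Qed.

Lemma cob_sub (f h : X -> int) : cob f -> cob h -> cob (fun x => f x - h x)%R.
Proof. by move=> cf ch; apply: cob_add => //; exact: cob_opp. Qed.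

Lemma cob_cnt (P : set (X * nat)) N g : clopen P ->
  cob (fun x => Posz (cnt P N x) - Posz (cnt P N (alpha g x)))%R.
Proof.
move=> cP; apply: (@cob_gen _ _ alpha (fun x => Posz (cnt P N x)) g).
apply/lc_contZ; exact: (lc_comp Posz (clopen_cnt N cP)).
Qed.

Lemma equidec_cob A B N : equidec A B -> bounded_by A N -> bounded_by B N ->
  cob (fun x => fiber_count A N x - fiber_count B N x)%R.
Proof.
move=> [n [P [g [s [cP [bs [eA [dP [eB dQ]]]]]]]]] bA bB.
have bP i : bounded_by (P i) N.
  by move=> x m Pm; apply: (bA x); rewrite eA; exists i.
have bQ i : bounded_by (act (g i) (s i) (P i)) N.
  by move=> x m Pm; apply: (bB x); rewrite eB; exists i.
apply: (cob_ext (h := fun x => \sum_(i <- enum 'I_n)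
   (Posz (cnt (P i) N x) - Posz (cnt (P i) N (alpha (inv (g i)) x))))%R); last first.
  by apply: cob_sum => i; exact: cob_cnt.
move=> x; rewrite !fcE (cnt_bigcup N x eA dP) (cnt_bigcup N x eB dQ).
rewrite big_enum /= sumrB !(big_morph Posz PoszD (erefl (Posz 0))).
congr (_ - _)%R; apply: eq_bigr => i _; by rewrite cnt_act.
Qed.

Lemma cnt_union (A B : set (X * nat)) N x : A `&` B = set0 ->
  cnt (A `|` B) N x = (cnt A N x + cnt B N x)%N.
Proof.
move=> dAB; rewrite /cnt -big_split; apply: eq_bigr => m _ /=.
have [Ap|nAp] := pselect (A (x, val m)).
  rewrite asboolT; last by left.
  rewrite (asboolT Ap) asboolF // => Bp.
  by have : (A `&` B) (x, val m) by []; rewrite dAB.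
rewrite (asboolF nAp) add0n.
have [Bp|nBp] := pselect (B (x, val m)).
  by rewrite !asboolT //; right.
by rewrite !asboolF // => -[].
Qed.

Lemma bounded_le (A : set (X * nat)) N M : bounded_by A N -> (N <= M)%N -> bounded_by A M.
Proof. by move=> bA le x n /bA /leq_trans; apply. Qed.

Lemma bounded_union (A B : set (X * nat)) N : bounded_by A N -> bounded_by B N ->
  bounded_by (A `|` B) N.
Proof. by move=> bA bB x n [/bA|/bB]. Qed.

Lemma inj_canc : pi_injective alpha -> T_cancellative alpha.
Proof.
move=> inj A B C A1 B1 A2 C2 cA cB cC cA1 cB1 cA2 cC2 eAA1 eBB1 d1 eAA2 eCC2 d2 eU.
apply: inj => //.
case: (cA) (cB) (cC) (cA1) (cB1) (cA2) (cC2) => _ [nA bA] [_ [nB bB]] [_ [nC bC]]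
  [_ [nA1 bA1]] [_ [nB1 bB1]] [_ [nA2 bA2]] [_ [nC2 bC2]].
pose N := (nA + nB + nC + nA1 + nB1 + nA2 + nC2)%N.
have bA' : bounded_by A N by apply: (bounded_le bA); rewrite /N; lia.
have bB' : bounded_by B N by apply: (bounded_le bB); rewrite /N; lia.
have bC' : bounded_by C N by apply: (bounded_le bC); rewrite /N; lia.
have bA1' : bounded_by A1 N by apply: (bounded_le bA1); rewrite /N; lia.
have bB1' : bounded_by B1 N by apply: (bounded_le bB1); rewrite /N; lia.
have bA2' : bounded_by A2 N by apply: (bounded_le bA2); rewrite /N; lia.
have bC2' : bounded_by C2 N by apply: (bounded_le bC2); rewrite /N; lia.
exists N; split => //.
have D1 := equidec_cob eBB1 bB' bB1'.
have D2 := equidec_cob eCC2 bC' bC2'.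
have D3 := equidec_cob eU (bounded_union bA1' bB1') (bounded_union bA2' bC2').
have D4 := equidec_cob eAA1 bA' bA1'.
have D5 := equidec_cob eAA2 bA' bA2'.
have := cob_add (cob_add (cob_sub D1 D2) D3) (cob_sub D4 D5).
apply: cob_ext => x; rewrite !fcE !cnt_union // !PoszD.
ring.
Qed.

Definition lcL (L : seq ((X -> nat) * G)) := forall q, List.In q L -> lc q.1.

Definition Lsum (L : seq ((X -> nat) * G)) (x : X) : int :=
  (\sum_(q <- L) (Posz (q.1 x) - Posz (q.1 (alpha q.2 x))))%R.

Lemma cob_list (h : X -> int) : cob h -> exists L, lcL L /\ forall x, h x = Lsum L x.
Proof.
move=> ch; induction ch as [f g cf| |f h _ [L1 [l1 e1]] _ [L2 [l2 e2]] | f _ [L [lL eL]]].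
- move/lc_contZ: cf => lf.
  pose p := fun x => if (0 <= f x)%R then absz (f x) else 0%N.
  pose q := fun x => if (0 <= f x)%R then 0%N else absz (f x).
  have fpq x : f x = (Posz (p x) - Posz (q x))%R.
    rewrite /p /q; case: ifP => h; first by rewrite subr0 gez0_abs.
    by rewrite sub0r ltz0_abs ?opprK // ltNge h.
  exists [:: (p, g); (q \o alpha g, inv g)]; split.
    move=> r /= [<-|[<-|//]] /=.
      exact: (lc_comp (fun v : int => if (0 <= v)%R then absz v else 0%N) lf).
    apply: lc_cont; first exact: acont.
    exact: (lc_comp (fun v : int => if (0 <= v)%R then 0%N else absz v) lf).
  move=> x; rewrite /Lsum !big_cons big_nil /= aKV !fpq; ring.
- by exists [::]; split => // x; rewrite /Lsum big_nil.
- exists (L1 ++ L2); split.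
    move=> r H; case: (List.in_app_or _ _ _ H) => H'; [exact: l1 | exact: l2].
  by move=> x; rewrite /Lsum big_cat /= -/(Lsum L1 x) -/(Lsum L2 x) e1 e2.
- exists [seq (r.1 \o alpha r.2, inv r.2) | r <- L]; split.
    move=> r H; case: (proj1 (List.in_map_iff _ _ _) H) => r' [<- /lL lr'] /=.
    by apply: lc_cont => //; exact: acont.
  move=> x; rewrite eL /Lsum big_map /= -sumrN; apply: eq_bigr => r _ /=.
  by rewrite aKV opprB.
Qed.

Definition stair (k : nat) (p : X -> nat) : set (X * nat) :=
  [set q | (k <= q.2 < k + p q.1)%N].

Lemma cnt_stair k p K x : cnt (stair k p) K x = (minn K (k + p x) - k)%N.
Proof.
elim: K => [|K IH]; first by rewrite /cnt big_ord0 min0n.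
rewrite /cnt big_ord_recr /= -/(cnt _ _ _) IH.
have [h|h] := boolP ((k <= K < k + p x)%N).
  rewrite asboolT //; move: h => /andP [h1 h2] /=; lia.
rewrite asboolF //=; last by move=> h'; move: h; rewrite h'.
move: h; rewrite negb_and -!ltnNge => /orP [h|h]; lia.
Qed.

Lemma clopen_stair k p : lc p -> clopen (stair k p).
Proof.
move=> lp; apply/clopenYP => n.
exact: (lc_comp (fun v => `[< (k <= n < k + v)%N >]) lp).
Qed.

Lemma equidec_single (P Q : set (X * nat)) g s : clopen P -> bijective s ->
  Q = act g s P -> equidec P Q.
Proof.
move=> cP bs eQ; apply: (@equidec_fin unit (fun=> P) (fun=> g) (fun=> s)) => //.
- by apply/seteqP; split => [p Ap|p [_ _ Ap]] //; exists tt.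
- by rewrite eQ; apply/seteqP; split => [p Ap|p [_ _ Ap]] //; exists tt.
Qed.

Lemma equidec_stair k p g : lc p ->
  equidec (stair k p) (stair k (p \o alpha g)).
Proof.
move=> lp; apply: (@equidec_single _ _ (inv g) id) => //.
- exact: clopen_stair.
- by exists id.
apply/seteqP; split => [[y n] /= Hy|[y n] [[x m] /= Hx [<- <-]]] /=.
  by exists (alpha g y, n) => //=; rewrite aK.
by move: Hx; rewrite /stair /= aKV.
Qed.

Fixpoint SL (f : (X -> nat) * G -> X -> nat) (k M : nat)
    (L : seq ((X -> nat) * G)) : set (X * nat) :=
  if L is q :: L' then stair k (f q) `|` SL f (k + M) M L' else set0.

Lemma SL_ge f k M L x n : SL f k M L (x, n) -> (k <= n)%N.
Proof.
elim: L k => [|q L IH] k //= [/andP [h _] //|/IH h].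
clear -h; lia.
Qed.

Section SLb.
Variables (f : (X -> nat) * G -> X -> nat) (M : nat) (L : seq ((X -> nat) * G)).
Hypothesis hb : forall q, List.In q L -> forall x, (f q x <= M)%N.

Lemma SL_bounded k : bounded_by (SL f k M L) (k + size L * M).
Proof.
elim: L hb k => [|q L' IH] hb' k x n //=; rewrite mulSn => -[/andP [_ h]|h].
  have := hb' q (or_introl erefl) x; simpl in h; lia.
have := IH (fun r hr => hb' r (or_intror hr)) (k + M) x n h; lia.
Qed.

Lemma SL_cnt k K x : (k + size L * M <= K)%N ->
  cnt (SL f k M L) K x = (\sum_(q <- L) f q x)%N.
Proof.
elim: L hb k => [|q L' IH] hb' k /=.
  by move=> _; rewrite big_nil /cnt big1 // => m _; rewrite asboolF.
rewrite mulSn => hK; rewrite big_cons cnt_union; last first.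
  apply/seteqP; split => // -[y n] [/= /andP [_ h1] /SL_ge h2].
  have := hb' q (or_introl erefl) y; simpl in h1; lia.
rewrite cnt_stair IH //; last lia.
  have := hb' q (or_introl erefl) x; lia.
by move=> r hr; apply: hb'; right.
Qed.

Lemma SL_clopen k : (forall q, List.In q L -> lc (f q)) -> clopen (SL f k M L).
Proof.
elim: L k => [|q L' IH] k hl /=; first exact: clopen0.
apply: clopenU; first by apply: clopen_stair; apply: hl; left.
by apply: IH => r hr; apply: hl; right.
Qed.

End SLb.

Lemma stair_SL_disj k M (p : X -> nat) f L : (forall x, (p x <= M)%N) ->
  stair k p `&` SL f (k + M) M L = set0.
Proof.
move=> hp; apply/seteqP; split => // -[y n] [/= /andP [_ h1] /SL_ge h2].
have := hp y; simpl in h1; lia.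
Qed.

Lemma SL_equidec k M L : lcL L -> (forall q, List.In q L -> forall x, (q.1 x <= M)%N) ->
  equidec (SL (fun q => q.1) k M L) (SL (fun q => q.1 \o alpha q.2) k M L).
Proof.
elim: L k => [|q L IH] k hl hb /=.
  by apply: equidec_refl; exact: clopen0.
apply: equidec_union.
- by apply: equidec_stair; apply: hl; left.
- by apply: IH => [r hr|r hr]; [apply: hl | apply: hb]; right.
- by apply: stair_SL_disj => x; apply: hb; left.
- by apply: stair_SL_disj => x /=; apply: hb; left.
Qed.

Lemma equidec_cnt A B N : clopen A -> clopen B -> bounded_by A N -> bounded_by B N ->
  (forall x, cnt A N x = cnt B N x) -> equidec A B.
Proof.
move=> cA cB bA bB eAB.
pose SA := sec A N; pose SB := sec B N.
have memA x (i : 'I_N) : (i \in SA x) = `[< A (x, val i) >] by rewrite inE.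
have memB x (i : 'I_N) : (i \in SB x) = `[< B (x, val i) >] by rewrite inE.
have cardAB x : #|SA x| = #|SB x| by rewrite -!cnt_sec.
pose I := ({set 'I_N} * {set 'I_N} * 'I_N)%type.
pose P := fun k : I => [set q : X * nat | q.2 = val k.2 /\ k.2 \in k.1.1 /\
   SA q.1 = k.1.1 /\ SB q.1 = k.1.2].
pose s := fun k : I => swapn (val k.2) (tgt k.1.1 k.1.2 k.2).
have imP k : act one (s k) (P k) =
   [set q | [/\ q.2 = tgt k.1.1 k.1.2 k.2, k.2 \in k.1.1,
   SA q.1 = k.1.1 & SB q.1 = k.1.2]].
  apply/seteqP; split => [_ [[x n] [/= -> [h1 [h2 h3]]] <-]|[x m] [/= -> h1 h2 h3]].
    by split => /=; rewrite ?a1 // /s swapnL.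
  by exists (x, val k.2) => //=; rewrite a1 /s swapnL.
apply: (@equidec_fin I P (fun=> one) s).
- move=> k; apply/clopenYP => n.
  have := lc_op2 pair (clopen_sec N cA) (clopen_sec N cB).
  move/(lc_comp (fun ST : {set 'I_N} * {set 'I_N} => `[< n = val k.2 /\ k.2 \in k.1.1 /\
     ST.1 = k.1.1 /\ ST.2 = k.1.2 >])).
  by apply: lc_ext => x.
- by move=> k; exists (s k); apply: swapnK.
- apply/seteqP; split => [[x n] Ap|[x n] [k _ [/= -> [h1 [h2 h3]]]]].
    have nN : (n < N)%N by exact: (bA x n Ap).
    exists (SA x, SB x, Ordinal nN) => //; rewrite /P /=; split => //.
    by split => //; rewrite memA; apply/asboolP.
  by move: h1; rewrite -h2 memA => /asboolP.
- move=> [[S T] i] [[S' T'] i'] kk'; apply/seteqP; split => // -[x n].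
  move=> [[/= e1 [h1 [h2 h3]]] [/= e1' [h1' [h2' h3']]]]; move/negP: kk'; apply.
  have eS : S = S' by rewrite -h2 -h2'.
  have eT : T = T' by rewrite -h3 -h3'.
  have ei : i = i' by apply: val_inj; rewrite /= -e1 -e1'.
  by rewrite eS eT ei.
- apply/seteqP; split => [[x m] Bp|[x m] [k _]]; last first.
    rewrite imP => -[/= -> h1 h2 h3].
    have eC : #|k.1.1| = #|k.1.2| by rewrite -h2 -h3; exact: cardAB.
    have [j jT ->] := tgt_mem h1 eC.
    by move: jT; rewrite -h3 memB => /asboolP.
  have mN : (m < N)%N by exact: (bB x m Bp).
  have jT : Ordinal mN \in SB x by rewrite memB; apply/asboolP.
  have [i iS ei] := tgt_surj jT (cardAB x).
  by exists (SA x, SB x, i) => //; rewrite imP; split => //=.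
- move=> [[S T] i] [[S' T'] i'] kk'; rewrite !imP; apply/seteqP; split => // -[x n].
  move=> [[/= e1 h1 h2 h3] [/= e1' h1' h2' h3']]; move/negP: kk'; apply.
  move: h1 h1' e1 e1'; rewrite -h2 -h3 -h2' -h3' => h1 h1' -> /(tgt_inj h1 h1' (cardAB x)) ->.
  by [].
Qed.

Lemma list_bound L : compact [set: X] -> lcL L ->
  exists M, forall q, List.In q L -> forall x, (q.1 x <= M)%N.
Proof.
move=> cX; elim: L => [|q L IH] hl; first by exists 0%N.
have [M1 h1] := lc_bounded cX (hl q (or_introl erefl)).
have [M2 h2] := IH (fun r hr => hl r (or_intror hr)).
exists (M1 + M2)%N => r [<-|hr] x.
  by have := h1 x; lia.
by have := h2 r hr x; lia.
Qed.

Lemma Lsum_eq L x : Lsum L x =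
  (Posz (\sum_(q <- L) q.1 x) - Posz (\sum_(q <- L) q.1 (alpha q.2 x)))%R.
Proof. by rewrite /Lsum sumrB !(big_morph Posz PoszD (erefl (Posz 0))). Qed.

Lemma canc_inj : compact [set: X] -> T_cancellative alpha -> pi_injective alpha.
Proof.
move=> cX canc A B [cA _] [cB _] [N [bA bB ch]].
have [L [lL eL]] := cob_list ch.
have [M hM] := list_bound cX lL.
pose f1 := fun q : (X -> nat) * G => q.1.
pose f2 := fun q : (X -> nat) * G => q.1 \o alpha q.2.
pose S1 := SL f1 N M L; pose S2 := SL f2 N M L.
pose K := (N + size L * M)%N.
have hb1 : forall q, List.In q L -> forall x, (f1 q x <= M)%N by move=> q hq x; exact: hM.
have hb2 : forall q, List.In q L -> forall x, (f2 q x <= M)%N by move=> q hq x; exact: hM.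
have cS1 : clopen S1 by apply: SL_clopen.
have cS2 : clopen S2.
  apply: SL_clopen => q hq; apply: lc_cont; [exact: acont | exact: lL].
have bS1 : bounded_by S1 K by exact: SL_bounded.
have bS2 : bounded_by S2 K by exact: SL_bounded.
have bcS1 : bclopen S1 by split => //; exists K.
have bcS2 : bclopen S2 by split => //; exists K.
have bcA : bclopen A by split => //; exists N.
have bcB : bclopen B by split => //; exists N.
have NK : (N <= K)%N by rewrite /K; lia.
have d2 : S2 `&` A = set0.
  apply/seteqP; split => // -[x n] [/SL_ge h1 /bA h2]; lia.
have d1 : S1 `&` B = set0.
  apply/seteqP; split => // -[x n] [/SL_ge h1 /bB h2]; lia.
apply: (canc S1 A B S2 A S1 B) => //.
- exact: SL_equidec.
- exact: equidec_refl.
- exact: equidec_refl.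
- exact: equidec_refl.
apply: (@equidec_cnt _ _ K).
- exact: clopenU.
- exact: clopenU.
- by apply: bounded_union => //; exact: bounded_le bA NK.
- by apply: bounded_union => //; exact: bounded_le bB NK.
move=> x; rewrite !cnt_union // !SL_cnt // !(cnt_widen _ bA NK) !(cnt_widen _ bB NK).
have := eL x; rewrite !fcE Lsum_eq /f1 /f2 /=; lia.
Qed.

End Main.

Theorem mainTheorem10 (G : countType) (mul : G -> G -> G) (one : G) (inv : G -> G)
  (X : topologicalType) (alpha : G -> X -> X) :
  is_group mul one inv ->
  compact [set: X] -> hausdorff_space X -> zero_dim X ->
  is_action mul one alpha ->
  (pi_injective alpha <-> T_cancellative alpha).
Proof.
move=> Hg cX _ _ Ha; split; first exact: (inj_canc Hg Ha).
exact: (canc_inj Hg Ha cX).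
Qed.
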